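(* For every $\varepsilon>0$ there exist a graph $G$ and an induced subgraph $H$ of $G$ such that $\operatorname{cdim}(H)>0$ and \[ \frac{\operatorname{cdim}(G)}{\operatorname{cdim}(H)}\leq \varepsilon. \]
   Context: All graphs are finite, simple, undirected and nonempty. For distinct vertices $v,w$, $\kappa(v,w)$ is the maximum number of internally vertex-disjoint $v$–$w$ paths (an edge $vw$ counts as one such path); $\kappa(v,v)=\infty$. For an ordered vertex set $W=(w_1,\ldots,w_k)$, $r_G(v,W)=[\kappa(v,w_1),\ldots,\kappa(v,w_k)]$. $W$ is resolving if $r_G(v_1,W)=r_G(v_2,W)$ implies $v_1=v_2$. The connectivity dimension $\operatorname{cdim}(G)$ is the minimum cardinality of a resolving set. *)

(* Defs.v *)
From HB Require Import structures.
From mathcomp Require Import all_boot.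
From mathcomp Require Import boolp.
Set Implicit Arguments. Unset Strict Implicit. Unset Printing Implicit Defensive.

Record sgraph := SGraph {
  vert :> finType;
  adj : rel vert;
  adj_sym : symmetric adj;
  adj_irr : irreflexive adj;
  vert_nonempty : 0 < #|vert| }.

Section Conn.
Variable G : sgraph.

Definition is_vw_path (v w : G) (p : seq G) : Prop :=
  exists2 rest : seq G, p = v :: rest &
    [/\ path (@adj G) v rest, last v rest = w & uniq p].

Definition interior (v w : G) (p : seq G) : seq G :=
  [seq x <- p | (x != v) && (x != w)].

Definition disjoint_paths (v w : G) (ps : seq (seq G)) : Prop :=
  [/\ uniq ps, (forall p, p \in ps -> is_vw_path v w p) &
      pairwise (fun p q => all (fun x => x \notin interior v w q)
                               (interior v w p)) ps].

(* kappa(v,w) for v <> w : the maximum number of internally vertex-disjoint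
   v-w paths; any such family has at most #|G| - 1 members, so the bound
   #|G|.+2 on the range is not restrictive. *)
Definition kappa_fin (v w : G) : nat :=
  \max_(k < #|G|.+2 | `[< exists ps, disjoint_paths v w ps /\ size ps = k >]) k.

(* kappa with value None standing for infinity (kappa(v,v) = oo). *)
Definition kappa (v w : G) : option nat :=
  if v == w then None else Some (kappa_fin v w).

(* W resolves G : equal connectivity representations force equality.
   (The ordering of W is irrelevant, so W is taken as a set.) *)
Definition resolving (W : {set G}) : Prop :=
  forall v1 v2 : G, (forall w, w \in W -> kappa v1 w = kappa v2 w) -> v1 = v2.

(* connectivity dimension: minimum cardinality of a resolving set
   ([set: G] is always resolving, so the default #|G| is harmless) *)
Definition cdim : nat :=
  \big[minn/#|G|]_(W : {set G} | `[< resolving W >]) #|W|.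

End Conn.

Definition induced_sub (H G : sgraph) : Prop :=
  exists f : H -> G, injective f /\ forall x y : H, adj x y = adj (f x) (f y).

(* Main.v *)
Require Import Defs.
From mathcomp Require Import all_boot.
From Stdlib Require Import Reals.
From mathcomp Require Import zify boolp.
From Stdlib Require Import Lra.
Set Implicit Arguments. Unset Strict Implicit. Unset Printing Implicit Defensive.

Lemma pairwise_two (T : eqType) (r : rel T) s x y :
  pairwise r s -> x \in s -> y \in s -> x != y -> r x y \/ r y x.
Proof.
elim: s => //= a s IH /andP [Ha Hs].
rewrite !in_cons => /orP [/eqP ->|xs] /orP [/eqP ->|ys] nxy.
- by rewrite eqxx in nxy.
- by left; move/allP: Ha; apply.
- by right; move/allP: Ha; apply.
- exact: IH.
Qed.

Lemma pairwise_all (T : eqType) (r : rel T) s :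
  (forall x y, x \in s -> y \in s -> x != y -> r x y) -> uniq s -> pairwise r s.
Proof.
elim: s => //= a s IH H /andP [Has Hu].
apply/andP; split.
  apply/allP => y ys; apply: H; rewrite ?in_cons ?eqxx ?ys ?orbT //.
  by apply: contraNneq Has => ->.
apply: IH => // x y xs ys; apply: H; by rewrite in_cons ?xs ?ys orbT.
Qed.

Section Gen.
Variable G : sgraph.
Definition nbh (v : G) := [set x | adj v x].

Lemma path_second (v w : G) p : v != w -> is_vw_path v w p ->
  exists x rest, [/\ p = v :: x :: rest, adj v x, last x rest = w & uniq p].
Proof.
move=> vw [[|x r] -> [Hp Hl Hu]]; first by move: Hl => /= Hl; rewrite Hl eqxx in vw.
move: Hp => /= /andP [Hx _]; by exists x, r.
Qed.

Lemma kappa_fin_le (v w : G) : v != w -> kappa_fin v w <= #|nbh v|.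
Proof.
move=> vw; apply/bigmax_leqP => k /asboolP [ps [[Hu Hp Hpw] <-]].
pose f := fun p : seq G => nth v p 1.
have Hf : forall p, p \in ps -> f p \in nbh v.
  move=> p /Hp /(path_second vw) [x [r [-> Hx _ _]]]; by rewrite /f /= inE.
have inj : {in ps &, injective f}.
  move=> p q pin qin; move: (pin) (qin) => /Hp /(path_second vw) [x [r [Ep Hx Hl Hup]]].
  move=> /Hp /(path_second vw) [x' [r' [Eq Hx' Hl' Huq]]].
  rewrite /f Ep Eq /= => Exx'; subst x'.
  apply/eqP; apply: contraT => npq.
  case: (eqVneq x w) => [xw|xw].
  - subst x.
    have r0 : forall r, last w r = w -> uniq [:: v, w & r] -> r = [::].
      move=> [|y s] //= Hl0 /and3P [_ Hn _].
      have := mem_last y s; rewrite Hl0 => Hm.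
      by rewrite Hm in Hn.
    rewrite Ep in Hup; rewrite Eq in Huq; by rewrite (r0 _ Hl Hup) (r0 _ Hl' Huq) eqxx in npq.
  - have xv : x != v by apply: contraTneq Hx => ->; rewrite adj_irr.
    have xi : forall s, x \in Defs.interior v w (v :: x :: s).
      by move=> s; rewrite /Defs.interior mem_filter xv xw !in_cons eqxx orbT.
    have npq2 : p != q by rewrite Ep Eq.
    have [] := pairwise_two Hpw pin qin npq2 => /allP H.
    + by move: (H x); rewrite Ep Eq xi => /(_ isT); rewrite xi.
    + by move: (H x); rewrite Ep Eq xi => /(_ isT); rewrite xi.
rewrite -(size_map f) cardE; apply: uniq_leq_size.
  by rewrite map_inj_in_uniq.
by move=> y /mapP [p pin ->]; rewrite mem_enum; apply: Hf.
Qed.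

Lemma kappa_fin_ge (v z : G) : v != z -> (forall x, x != z -> adj x z) ->
  #|nbh v| <= kappa_fin v z.
Proof.
move=> vz univ.
pose g := fun x : G => if x == z then [:: v; z] else [:: v; x; z].
pose ps := map g (enum (nbh v)).
have gx : forall x, nth v (g x) 1 = x by move=> x; rewrite /g; case: eqP.
have ginj : injective g by move=> x y E; rewrite -(gx x) -(gx y) E.
have Hint : forall x, x \in nbh v -> Defs.interior v z (g x) = if x == z then [::] else [:: x].
  move=> x; rewrite inE => vx; rewrite /g /Defs.interior.
  have xv : x != v by apply: contraTneq vx => ->; rewrite adj_irr.
  case: (eqVneq x z) => [xz|xz] /=; by rewrite !eqxx /= ?andbF ?xv ?xz /=.
have Hd : disjoint_paths v z ps.
  split.
  - by rewrite map_inj_uniq // enum_uniq.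
  - move=> p /mapP [x]; rewrite mem_enum inE => vx ->; rewrite /g.
    have xv : x != v by apply: contraTneq vx => ->; rewrite adj_irr.
    case: eqP => [xz|/eqP xz].
    + exists [:: z] => //; split => //=; first by rewrite -xz vx.
      by rewrite inE vz.
    + exists [:: x; z] => //; split => //=; first by rewrite vx univ.
      by rewrite !inE negb_or eq_sym xv vz xz.
  - rewrite pairwise_map; apply: pairwise_all; last exact: enum_uniq.
    move=> x y; rewrite !mem_enum => xn yn xy /=.
    rewrite (Hint _ xn) (Hint _ yn); case: (x == z) => //=.
    case: (y == z) => /=; by rewrite ?inE ?andbT.
have Hs : size ps = #|nbh v| by rewrite size_map -cardE.
have Hlt : #|nbh v| < #|G|.+2 by rewrite ltnS leqW // max_card.
have := @leq_bigmax_cond _ (fun k : 'I_(#|G|.+2) => `[< exists ps, disjoint_paths v z ps /\ size ps = k >])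
  (fun k => nat_of_ord k) (Ordinal Hlt).
apply; apply/asboolP; by exists ps.
Qed.

Lemma kappa_fin_univ (v z : G) : v != z -> (forall x, x != z -> adj x z) ->
  kappa_fin v z = #|nbh v|.
Proof. by move=> vz u; apply/anti_leq; rewrite kappa_fin_le // kappa_fin_ge. Qed.

End Gen.

Lemma E_sym n : symmetric (fun _ _ : 'I_n.+1 => false). Proof. by []. Qed.
Lemma E_irr n : irreflexive (fun _ _ : 'I_n.+1 => false). Proof. by []. Qed.
Lemma E_ne n : 0 < #|'I_n.+1|. Proof. by rewrite card_ord. Qed.
Definition Egr n := @SGraph 'I_n.+1 _ (@E_sym n) (@E_irr n) (@E_ne n).

Lemma cdim_ge_gen (G : sgraph) n : n <= #|G| ->
  (forall W : {set G}, resolving W -> n <= #|W|) -> n <= cdim G.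
Proof.
move=> Hn HW; rewrite /cdim; apply: (big_ind (fun m => n <= m)) => //.
  by move=> a b ha hb; rewrite leq_min ha hb.
by move=> W /asboolP; apply: HW.
Qed.

Lemma bigmin_le_seq (I : eqType) (r : seq I) (P : pred I) (F : I -> nat) x j :
  j \in r -> P j -> \big[minn/x]_(i <- r | P i) F i <= F j.
Proof.
elim: r => // a r IH; rewrite in_cons big_cons => /orP [/eqP <-|jr] Pj.
  by rewrite Pj geq_minl.
by case: (P a); [rewrite geq_min IH ?orbT | exact: IH].
Qed.

Lemma cdim_le_gen (G : sgraph) (W : {set G}) : resolving W -> cdim G <= #|W|.
Proof.
move=> HW; rewrite /cdim; apply: bigmin_le_seq; first exact: mem_index_enum.
exact/asboolP.
Qed.

Lemma cdim_E n : n <= cdim (Egr n).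
Proof.
apply: cdim_ge_gen; first by rewrite card_ord.
move=> W HW; rewrite leqNgt; apply/negP => Hlt.
have : 1 < #|~: W| by move: (cardsC W); rewrite card_ord; lia.
move/card_gt1P => [x [y [xW yW xy]]].
have k0 : forall (a w : Egr n), a != w -> kappa a w = Some 0.
  move=> a w aw; rewrite /kappa (negbTE aw); congr Some.
  apply/eqP; rewrite -leqn0; apply: leq_trans (kappa_fin_le aw) _.
  rewrite leqn0 cards_eq0; apply/eqP/setP => b; by rewrite !inE.
have : x = y.
  apply: HW => w wW.
  rewrite !k0 //; [apply: contraTneq yW | apply: contraTneq xW]; by move=> ->; rewrite inE wW.
by move/eqP; rewrite (negbTE xy).
Qed.

Lemma card_nat n (P : nat -> bool) : #|[set j : 'I_n | P j]| = count P (iota 0 n).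
Proof.
rewrite -val_enum_ord count_map cardE /enum_mem size_filter -enumT.
rewrite (@eq_filter _ _ predT) // filter_predT; apply: eq_count => j; by rewrite /= inE.
Qed.

Lemma deg_count k i : 0 < i <= k + k ->
  count (fun j => (i != j) && ((i == 0) || (j == 0) || (k + k < i + j))) (iota 0 (k + k).+1)
  = 1 + (i - (k < i)).
Proof.
move=> /andP [i0 im]; set m := k + k in im *.
rewrite /= eqxx orbT andbT.
have -> : (i != 0) = true by apply/eqP; lia.
rewrite (@eq_in_count _ _ (fun j => (i != j) && (m < i + j))); last first.
  move=> j; rewrite mem_iota => /andP [j1 _].
  have -> : (i == 0) = false by apply/eqP; lia.
  by have -> : (j == 0) = false by apply/eqP; lia.
have E : iota 1 m = iota 1 (m - i) ++ iota (1 + (m - i)) i by rewrite -iotaD subnK.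
rewrite E count_cat.
rewrite (@eq_in_count _ _ pred0 (iota 1 (m - i))); last first.
  move=> j; rewrite mem_iota => /andP [j1 j2] /=.
  by rewrite ltnNge (_ : i + j <= m) ?andbF //; lia.
rewrite count_pred0 add0n.
rewrite (@eq_in_count _ _ (predC (pred1 i))); last first.
  move=> j; rewrite mem_iota => /andP [j1 j2] /=.
  by rewrite eq_sym (_ : m < i + j) ?andbT //; lia.
have := count_predC (pred1 i) (iota (1 + (m - i)) i).
rewrite size_iota.
have := count_uniq_mem i (iota_uniq (1 + (m - i)) i).
rewrite mem_iota /= => ->.
case: (ltnP k i) => ki; rewrite /m in ki *.
- have -> : (1 + (k + k - i) <= i) && (i < 1 + (k + k - i) + i) = true by apply/andP; split; lia.
  move=> /=; lia.
- have -> : (1 + (k + k - i) <= i) && (i < 1 + (k + k - i) + i) = false by apply/negbTE; apply/nandP; left; lia.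
  move=> /=; lia.
Qed.

Definition adjA k (i j : 'I_(k + k).+1) : bool :=
  ((i : nat) != j) && ((i == 0 :> nat) || (j == 0 :> nat) || (k + k < i + j)).
Lemma A_sym k : symmetric (@adjA k).
Proof. move=> i j; rewrite /adjA eq_sym addnC; by case: (nat_of_ord i == 0); case: (nat_of_ord j == 0). Qed.
Lemma A_irr k : irreflexive (@adjA k).
Proof. by move=> i; rewrite /adjA eqxx. Qed.
Lemma A_ne k : 0 < #|'I_(k + k).+1|. Proof. by rewrite card_ord. Qed.
Definition Agr k := @SGraph 'I_(k + k).+1 _ (@A_sym k) (@A_irr k) (@A_ne k).

Lemma deg_A k (i : Agr k) : (i : nat) != 0 -> #|nbh i| = 1 + (i - (k < i)).
Proof.
move=> i0.
transitivity (count (fun j => ((i : nat) != j) && ((i == 0 :> nat) || (j == 0) || (k + k < i + j))) (iota 0 (k + k).+1)).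
  rewrite -card_nat; apply: eq_card => j; by rewrite !inE.
rewrite deg_count //.
by rewrite lt0n i0 -ltnS ltn_ord.
Qed.

Lemma cdim_A k : 0 < k -> cdim (Agr k) <= 2.
Proof.
move=> k0; have kk : k.+1 < (k + k).+1 by lia.
pose z : Agr k := ord0.
pose y : Agr k := inord k.+1.
have univ : forall x : Agr k, x != z -> adj x z.
  move=> x xz; rewrite /= /adjA /= orbT andbT.
  by apply: contra xz => /eqP x0; apply/eqP/val_inj.
have kN : forall (v w : Agr k), (kappa v w == None) = (v == w).
  by move=> v w; rewrite /kappa; case: (v == w).
have Hres : resolving [set z; y].
  move=> v1 v2 H.
  have Hz := H z (setU11 _ _). have Hy := H y (setU1r _ (set11 _)).
  have ez : (v1 == z) = (v2 == z) by rewrite -(kN v1 z) -(kN v2 z) Hz.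
  have ey : (v1 == y) = (v2 == y) by rewrite -(kN v1 y) -(kN v2 y) Hy.
  case: (eqVneq v1 z) ez => [-> /esym/eqP -> //| v1z /esym v2z].
  case: (eqVneq v1 y) ey => [-> /esym/eqP -> //| v1y /esym v2y].
  move: Hz; rewrite /kappa (negbTE v1z) v2z => -[].
  rewrite !kappa_fin_univ // ?v2z //.
  have nz : forall v : Agr k, v != z -> (v : nat) != 0.
    by move=> v; apply: contra => /eqP v0; apply/eqP/val_inj.
  have ny : forall v : Agr k, v != y -> (v : nat) != k.+1.
    move=> v; apply: contra => /eqP vk; apply/eqP/val_inj; by rewrite /= vk inordK.
  rewrite (deg_A (nz _ v1z)) (deg_A (nz _ (negbT v2z))).
  have := nz _ v1z; have := nz _ (negbT v2z); have := ny _ v1y; have := ny _ (negbT v2y).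
  have := ltn_ord v1; have := ltn_ord v2.
  move=> h1 h2 h3 h4 h5 h6 E; apply: val_inj.
  change (nat_of_ord v1 = nat_of_ord v2).
  move: h1 h2 h3 h4 h5 h6 E; set a := nat_of_ord v1; set b := nat_of_ord v2.
  clearbody a b; clear -a b.
  case: (ltnP k a) => ha; case: (ltnP k b) => hb /=; lia.
apply: leq_trans (cdim_le_gen Hres) _.
by rewrite cards2 ltnS leq_b1.
Qed.

Lemma induced_EA n : induced_sub (Egr n) (Agr n.+1).
Proof.
have hi : forall i : 'I_n.+1, i.+1 < (n.+1 + n.+1).+1 by move=> i; have := ltn_ord i; lia.
exists (fun i : 'I_n.+1 => (inord i.+1 : 'I_(n.+1 + n.+1).+1)); split.
  move=> i j /(congr1 val); rewrite /= !inordK ?hi //.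
  by move=> /eq_add_S E; apply: val_inj.
move=> x y /=; rewrite /adjA !inordK ?hi //.
have := ltn_ord x; have := ltn_ord y; move=> hx hy.
symmetry; apply/negbTE; rewrite negb_and; apply/orP; right.
rewrite /= -leqNgt; lia.
Qed.

Theorem mainTheorem6 :
  forall eps : R, (0 < eps)%R ->
  exists (G H : sgraph), induced_sub H G /\ 0 < cdim H /\
    (INR (cdim G) / INR (cdim H) <= eps)%R.
Proof.
move=> eps heps.
have [N HN] := INR_unbounded (2 / eps).
exists (Agr N.+2), (Egr N.+1); split; first exact: induced_EA.
have hH := cdim_E N.+1.
have hG := @cdim_A N.+2 isT.
split; first by apply: leq_trans hH.
have hG' : (INR (cdim (Agr N.+2)) <= 2)%R by apply: (le_INR _ 2); apply/leP.
have hH' : (INR N.+1 <= INR (cdim (Egr N.+1)))%R by apply: le_INR; apply/leP.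
have hN : (INR N <= INR N.+1)%R by apply: le_INR; apply/leP.
set a := INR (cdim (Agr N.+2)) in hG' *.
set b := INR (cdim (Egr N.+1)) in hH' *.
have hb : (2 / eps < b)%R by lra.
have hpos : (0 < 2 / eps)%R by apply: Rdiv_lt_0_compat; lra.
have hb0 : (0 < b)%R by lra.
have h2 : (2 < eps * b)%R.
  have := Rmult_lt_compat_l eps _ _ heps hb.
  by rewrite /Rdiv (Rmult_comm 2) -Rmult_assoc Rinv_r ?Rmult_1_l; lra.
apply: (Rmult_le_reg_r b) => //.
rewrite /Rdiv Rmult_assoc Rinv_l; lra.
Qed.
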